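(* Let $z(t)$, $t\in[0,T]$, be a càdlàg Markov process with values in $\mathbb{R}^m$ on $(\Omega,\mathcal{F},P)$, let $D\subset\mathbb{R}^m$ be closed, and let $\tau_t\triangleq\inf\{s\in[t,T]: z(s)\notin D\}$ (with $\inf\emptyset=\infty$). Let $0=t_0<t_1<\dots<t_k=T$ be a partition and write $z_i=z(t_i)$, $\tau_i=\tau_{t_i}$. Let $\bar b_i$ denote the law of $z_i$, and define the (regular conditional) function $\bar\Psi_i(\zeta)\triangleq P(\tau_0\ge t_i,\ z_i\in D\mid z_i=\zeta)$. For a finite (not necessarily normalized) measure $\mu$ on $\mathbb{R}^m$ define $$\Phi(t_i,t_{i+1};\mu)\triangleq\int_{\mathbb{R}^m} P(\tau_i<t_{i+1}\mid z_i=\zeta)\,\mu(d\zeta).$$ Then the exit cumulant $F(T)\triangleq P\big(\exists s\in[0,T]: z(s)\notin D\big)$ satisfies $$F(T)=\sum_{i=0}^{k-1}\Phi\big(t_i,t_{i+1};\bar\Psi_i\,\bar b_i\big)+\sum_{i=0}^{k}P\big(\tau_0=t_i,\ z_i\in D^c\big),$$ where $\bar\Psi_i\bar b_i$ denotes the measure $\bar\Psi_i(\zeta)\,\bar b_i(d\zeta)$.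
   Context: $D^c$ is the complement of $D$. The Markov property is used in the sense that, conditionally on $z(t_i)$, the future path $(z(s))_{s\ge t_i}$ is independent of $(z(s))_{s\le t_i}$. *)

(* Defs.v *)
From HB Require Import structures.
From mathcomp Require Import all_boot all_order all_algebra.
From mathcomp Require Import all_classical all_reals all_analysis.
Set Implicit Arguments. Unset Strict Implicit. Unset Printing Implicit Defensive.
Import Order.TTheory GRing.Theory Num.Theory.
Import numFieldNormedType.Exports.
Local Open Scope classical_set_scope.
Local Open Scope ring_scope.

Definition state (R : realType) (m : nat) := g_sigma_algebraType (@open 'rV[R]_m).

(* View a state as a vector of R^m (to use the topology of 'rV[R]_m). *)
Definition toRm (R : realType) (m : nat) (x : state R m) : 'rV[R]_m := x.

Section process.
Context (R : realType) (d : measure_display) (Omega : measurableType d) (m : nat).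
Variable (P : probability Omega R).
Variable (Z : R -> {mfun Omega >-> state R m}).

Definition cadlag (T : R) : Prop :=
  forall w : Omega,
    (forall s, 0 <= s < T ->
       (fun r => toRm (Z r w)) @ s^'+ --> toRm (Z s w)) /\
    (forall s, 0 < s <= T -> cvg ((fun r => toRm (Z r w)) @ s^'-)).

Definition tau (D : set 'rV[R]_m) (T t : R) (w : Omega) : \bar R :=
  ereal_inf [set s%:E | s in [set s | t <= s <= T /\ ~ D (toRm (Z s w))]].

Definition past (t : R) : set (set Omega) :=
  <<s [set A | exists s B, 0 <= s <= t /\ measurable B /\ A = Z s @^-1` B] >>.
Definition future (T t : R) : set (set Omega) :=
  <<s [set A | exists s B, t <= s <= T /\ measurable B /\ A = Z s @^-1` B] >>.

(* g is a (version of the) regular conditional probability  P(A | X = .),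
   i.e. P(A /\ X \in B) = \int_B g d(law of X) for every Borel B. *)
Definition cond_prob_fun (X : {mfun Omega >-> state R m}) (A : set Omega)
    (g : state R m -> R) : Prop :=
  measurable_fun [set: state R m] g /\
  forall B : set (state R m), measurable B ->
    P (A `&` X @^-1` B) = (\int[distribution P X]_(x in B) (g x)%:E)%E.

Definition markov_property (T : R) : Prop :=
  forall t, 0 <= t <= T ->
  forall A B, future T t A -> past t B ->
  forall gA gB gAB,
    cond_prob_fun (Z t) A gA -> cond_prob_fun (Z t) B gB ->
    cond_prob_fun (Z t) (A `&` B) gAB ->
    {ae P, forall w, gAB (Z t w) = gA (Z t w) * gB (Z t w)}.

Definition exit_cumulant (D : set 'rV[R]_m) (T : R) : \bar R :=
  P [set w | exists s, 0 <= s <= T /\ ~ D (toRm (Z s w))].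

(* Phi(t_i, t_{i+1}; psi b) = \int h(zeta) (psi(zeta) b(dzeta)), where
   h(zeta) = P(tau_i < t_{i+1} | z_i = zeta) and the measure psi b has
   density psi w.r.t. b. *)
Definition Phi (b : {measure set (state R m) -> \bar R}) (h psi : state R m -> R)
  : \bar R := (\int[b]_x (h x * psi x)%:E)%E.

End process.

(* Main.v *)
Require Import Defs.
From HB Require Import structures.
From mathcomp Require Import all_boot all_order all_algebra.
From mathcomp Require Import all_classical all_reals all_analysis.
From mathcomp Require Import measurable_realfun.
Set Warnings "-redundant-canonical-projection -notation-overridden -ambiguous-paths -notation-incompatible-prefix".
Import Order.TTheory GRing.Theory Num.Theory.
Import numFieldNormedType.Exports.
Local Open Scope classical_set_scope.
Local Open Scope ring_scope.
Section nuAB.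
Local Open Scope ereal_scope.
Context {R : realType} {d : measure_display} {Omega : measurableType d}
  (P : probability Omega R) {m : nat} (X : {mfun Omega >-> state R m})
  (A : set Omega) (mA : measurable A).

Definition nuAB : set (state R m) -> \bar R := fun C => mrestr P mA (X @^-1` C).

Let mX C : measurable C -> measurable (X @^-1` C).
Proof. by move=> mC; rewrite -[X in measurable X]setTI; exact: measurable_funP. Qed.

Let nu0 : nuAB set0 = 0.
Proof. by rewrite /nuAB /mrestr preimage_set0 set0I measure0. Qed.

Let nu_ge0 C : 0 <= nuAB C.
Proof. exact: measure_ge0. Qed.

Let nu_sa : semi_sigma_additive nuAB.
Proof.
move=> F mF tF mUF; rewrite /nuAB preimage_bigcup.
have := (@measure_semi_sigma_additive _ _ _ (mrestr P mA) (fun n => X @^-1` F n)).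
rewrite /mrestr; apply.
- by move=> n; exact: mX.
- apply/trivIsetP => /= i j _ _ ij; rewrite -preimage_setI.
  by move/trivIsetP : tF => /(_ _ _ _ _ ij) ->//; rewrite preimage_set0.
- by rewrite -preimage_bigcup; exact: mX.
Qed.

HB.instance Definition _ := isMeasure.Build _ _ _ nuAB nu0 nu_ge0 nu_sa.

Let nu_fin : fin_num_fun nuAB.
Proof.
move=> C mC; rewrite ge0_fin_numE// (le_lt_trans _ (ltry 1)) //.
rewrite /nuAB /mrestr -(probability_setT P) le_measure // inE //.
by apply: measurableI => //; exact: mX.
Qed.

HB.instance Definition _ := Measure_isFinite.Build _ _ _ nuAB nu_fin.

End nuAB.

Lemma cond_exists (R : realType) (d : measure_display) (Omega : measurableType d)
  (P : probability Omega R) (m : nat) (X : {mfun Omega >-> state R m})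
  (A : set Omega) (mA : measurable A) : exists g, cond_prob_fun P X A g.
Proof.
pose nu : {charge set state R m -> \bar R} := nuAB P X A mA.
pose mu : {sigma_finite_measure set state R m -> \bar R} := distribution P X.
have numu : nu `<< mu.
  apply/null_content_dominatesP => C mC muC.
  apply/eqP; rewrite eq_le measure_ge0 andbT -muC.
  have mXC : measurable (X @^-1` C).
    rewrite -[X in measurable X]setTI; exact: measurable_funP.
  rewrite /nu /= /nuAB /mrestr /mu /distribution /pushforward.
  apply: le_measure; rewrite ?inE //; first exact: measurableI.

pose f := Radon_Nikodym nu mu.
have ff x : f x \is a fin_num := Radon_Nikodym_fin_num x numu.
have mf := measurable_int _ (Radon_Nikodym_integrable numu).
exists (fine \o f); split.
  apply/measurable_EFinP; apply: (eq_measurable_fun f) => // x _ /=.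
  by rewrite fineK.
move=> B mB; rewrite setIC.
have -> : P (X @^-1` B `&` A) = nu B by [].
rewrite (Radon_Nikodym_integral numu mB); apply: eq_integral => x _ /=.
by rewrite fineK.
Qed.

Lemma markov_step (R : realType) (d : measure_display) (Omega : measurableType d)
  (P : probability Omega R) (m : nat) (T : R)
  (Z : R -> {mfun Omega >-> state R m}) (tj : R) (A B : set Omega)
  (hA hB : state R m -> R) :
  0 <= tj <= T -> markov_property P Z T -> future Z T tj A -> past Z tj B ->
  measurable A -> measurable B ->
  cond_prob_fun P (Z tj) A hA -> cond_prob_fun P (Z tj) B hB ->
  P (A `&` B) = Phi (distribution P (Z tj)) hA hB.
Proof.
move=> htj HM FA PB mA mB cA cB.
have mAB : measurable (A `&` B) by exact: measurableI.
have [g Hg] := @cond_exists R d Omega P m (Z tj) (A `&` B) mAB.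
have ae := HM tj htj A B FA PB hA hB g cA cB Hg.
have := Hg.2 setT measurableT; rewrite preimage_setT setIT => ->.
rewrite /Phi.
have mg := Hg.1.
have mAf := cA.1.
have mBf := cB.1.
have mhh : measurable_fun setT (fun x => hA x * hB x) by exact: measurable_funM.
apply: ae_eq_integral => //.
- exact/measurable_EFinP.
- exact/measurable_EFinP.
pose N := (fun x => g x - hA x * hB x) @^-1` (~` [set 0]).
have mN : measurable N.
  rewrite -[N]setTI; apply: (measurable_funB mg mhh) => //.
  exact: measurableC.
exists N; split => //; last first.
  move=> x /= /not_implyP[_ /eqP ne]; rewrite /N /=.
  move/eqP; rewrite subr_eq0 => /eqP gE; by rewrite gE eqxx in ne.
case: ae => N0 [mN0 PN0 sN0].
rewrite /distribution /pushforward; apply/eqP; rewrite eq_le measure_ge0 andbT.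
rewrite -PN0; change (P (Z tj @^-1` N) <= P N0)%E; apply: le_measure; rewrite ?inE //.
  rewrite -[X in measurable X]setTI; exact: measurable_funP.
move=> w /= Nw; apply: sN0 => /= eqw; apply: Nw.
by rewrite /= eqw subrr.
Qed.

Section exits.
Context {R : realType} {d : measure_display} {Omega : measurableType d} {m : nat}.
Variables (Z : R -> {mfun Omega >-> state R m}) (D : set 'rV[R]_m) (T : R).

Lemma tau_geP a c w : ((c%:E <= tau Z D T a w)%E <->
  (forall s, a <= s <= T -> ~ D (toRm (Z s w)) -> c <= s)).
Proof.
rewrite /tau; split.
  move/ereal_infP => H s hs hD; rewrite -lee_fin; apply: H.
  by exists s.
move=> H; apply/ereal_infP => _ [s [hs hD] <-]; rewrite lee_fin; exact: H.
Qed.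

Lemma tau_ltP a c w : ((tau Z D T a w < c%:E)%E <->
  (exists s, [/\ a <= s <= T, ~ D (toRm (Z s w)) & s < c])).
Proof.
rewrite /tau; split.
  by move/ereal_inf_ltP => [_ [s [hs hD] <-]]; rewrite lte_fin => sc; exists s.
move=> [s [hs hD sc]]; apply/ereal_inf_ltP; exists s%:E => //; exists s => //.
Qed.

Definition Ex (a c : R) : set Omega :=
  [set w | exists s, a <= s < c /\ ~ D (toRm (Z s w))].

Hypothesis HZ : cadlag Z T.
Hypothesis cD : closed D.

Lemma Ex_in (S : set (set Omega)) a c : 0 <= a -> c <= T -> S set0 ->
  (forall F : (set Omega)^nat, (forall n, S (F n)) -> S (\bigcup_n F n)) ->
  (forall s, a <= s <= c -> S (Z s @^-1` (~` D))) -> S (Ex a c).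
Proof.
move=> a0 cT S0 SU SZ.
have [ca|ac] := leP c a.
  suff -> : Ex a c = set0 by [].
  apply/seteqP; split => // w [s [/andP[hs1 hs2] _]].
  by have := lt_le_trans (le_lt_trans hs1 hs2) ca; rewrite ltxx.
pose F (n : nat) : set Omega := if n is n'.+1 then
  (match (unpickle n' : option rat) with
   | Some q => if (a < ratr q) && (ratr q < c) then Z (ratr q) @^-1` (~` D) else set0
   | None => set0 end) else Z a @^-1` (~` D).
have -> : Ex a c = \bigcup_n F n.
  apply/seteqP; split => w.
    move=> [s [/andP[asx sc] hD]].
    have [eas|neq] := eqVneq a s; first by exists 0%N => //=; rewrite eas.
    have {neq}as2 : a < s by rewrite lt_neqAle neq.
    have s0 : 0 <= s < T by rewrite (le_trans a0 asx) (lt_le_trans sc cT).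
    have Hc := (HZ w).1 s s0.
    have ob : open_nbhs (toRm (Z s w)) (~` D) by split => //; exact: closed_openC.
    have := Hc _ (open_nbhs_nbhs ob).
    move=> [e /= e0 He].
    have smin : s < Num.min (s + e) c by rewrite lt_min ltrDl e0 sc.
    have [q] := rat_in_itvoo smin.
    rewrite in_itv /= lt_min => /andP[sq /andP[qse qc]].
    exists (pickle q).+1; first exact: I.
    rewrite /F pickleK (lt_trans as2 sq) qc /=.
    apply: He => //=; rewrite ltr0_norm ?subr_lt0 // opprB ltrBlDl //.
  move=> [[|n] _ /=]; first by move=> H; exists a; split => //; rewrite lexx ac.
  case: (unpickle n) => [q|//].
  case: ifP => // /andP[aq qc] hD; exists (ratr q); split => //; rewrite ltW // qc.
have SF n : S (F n).
  case: n => [|n] /=; first by apply: SZ; rewrite lexx ltW.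
  case: (unpickle n) => [q|//]; case: ifP => // /andP[aq qc].
  by apply: SZ; rewrite !ltW.
exact: SU.
Qed.


Lemma notEx_tau c w : c <= T ->
  ((c%:E <= tau Z D T 0 w)%E <-> ~ Ex 0 c w).
Proof.
move=> cT; rewrite tau_geP; split.
  move=> H [s [/andP[s0 sc] hD]].
  have := H s; rewrite s0 (ltW (lt_le_trans sc cT)) => /(_ isT hD).
  by rewrite leNgt sc.
move=> H s /andP[s0 sT] hD; rewrite leNgt; apply/negP => sc.
by apply: H; exists s; rewrite s0 sc.
Qed.

Lemma Ex_tau a c w : c <= T ->
  ((tau Z D T a w < c%:E)%E <-> Ex a c w).
Proof.
move=> cT; rewrite tau_ltP; split.
  by move=> [s [/andP[as1 _] hD sc]]; exists s; rewrite as1 sc.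
move=> [s [/andP[as1 sc] hD]]; exists s; split => //.
by rewrite as1 (ltW (lt_le_trans sc cT)).
Qed.

Lemma tau_le s w : 0 <= s <= T -> ~ D (toRm (Z s w)) ->
  (tau Z D T 0 w <= s%:E)%E.
Proof.
move=> hs hD; rewrite /tau; apply: ereal_inf_lbound; exists s => //.
Qed.
End exits.

Lemma sigmaI (T0 : pointedType) (G : set (set T0)) (A B : set T0) :
  <<s G >> A -> <<s G >> B -> <<s G >> (A `&` B).
Proof. move=> hA hB; exact: (@measurableI _ (g_sigma_algebraType G)). Qed.

Lemma sigmaC (T0 : pointedType) (G : set (set T0)) (A : set T0) :
  <<s G >> A -> <<s G >> (~` A).
Proof. exact: sigma_algebraC. Qed.

Theorem mainTheorem2 (R : realType) (d : measure_display) (Omega : measurableType d)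
  (P : probability Omega R) (m : nat) (T : R)
  (Z : R -> {mfun Omega >-> state R m}) (D : set 'rV[R]_m)
  (k : nat) (t : nat -> R) (Psi h : nat -> state R m -> R) :
  cadlag Z T -> markov_property P Z T -> closed D ->
  (0 < k)%N -> t 0%N = 0 -> t k = T ->
  (forall i, (i < k)%N -> t i < t i.+1) ->
  (* Psi i = P(tau_0 >= t_i, z_i \in D | z_i = .) *)
  (forall i, (i < k)%N ->
     cond_prob_fun P (Z (t i))
       [set w | ((t i)%:E <= tau Z D T 0 w)%E /\ D (toRm (Z (t i) w))] (Psi i)) ->
  (* h i = P(tau_i < t_{i+1} | z_i = .) *)
  (forall i, (i < k)%N ->
     cond_prob_fun P (Z (t i))
       [set w | (tau Z D T (t i) w < (t i.+1)%:E)%E] (h i)) ->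
  exit_cumulant P Z D T =
    (\sum_(i < k) Phi (distribution P (Z (t i))) (h i) (Psi i)
     + \sum_(i < k.+1)
         P [set w | tau Z D T 0 w = (t i)%:E /\ ~ D (toRm (Z (t i) w))])%E.
Proof.
move=> HZ HM cD k0 t0 tk tinc HPsi Hh.
have ExT := @Ex_tau _ _ _ _ Z D T.
have nExT := @notEx_tau _ _ _ _ Z D T.
have ExI := @Ex_in _ _ _ _ Z D T HZ cD.
have tmono : forall j i, (i <= j)%N -> (j <= k)%N -> t i <= t j.
  elim=> [|j IH] i ij jk; first by move: ij; rewrite leqn0 => /eqP ->.
  move: ij; rewrite leq_eqVlt => /orP[/eqP -> //|]; rewrite ltnS => ij.
  exact: le_trans (IH i ij (ltnW jk)) (ltW (tinc j jk)).
have tb i : (i <= k)%N -> 0 <= t i <= T.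
  move=> ik; rewrite -t0 -tk tmono // tmono //.
have mDc : measurable (~` D : set (state R m)).
  by apply: sub_sigma_algebra; exact: closed_openC.
have mD : measurable (D : set (state R m)).
  by rewrite -[D]setCK; exact: measurableC.
have mpre s (B : set (state R m)) : measurable B -> measurable (Z s @^-1` B).
  by move=> mB; rewrite -[X in measurable X]setTI; exact: measurable_funP.
have mEx a c : 0 <= a -> c <= T -> measurable (Ex Z D a c).
  move=> a0 cT; apply: ExI => //.
    by move=> F mF; exact: bigcupT_measurable.
  by move=> s _; exact: mpre.
pose AB i := [set w | (tau Z D T (t i) w < (t i.+1)%:E)%E] `&`
  [set w | ((t i)%:E <= tau Z D T 0 w)%E /\ D (toRm (Z (t i) w))].
pose E i := [set w | tau Z D T 0 w = (t i)%:E /\ ~ D (toRm (Z (t i) w))].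
have hAB i : (i < k)%N -> AB i =
    Ex Z D (t i) (t i.+1) `&` (~` Ex Z D 0 (t i) `&` Z (t i) @^-1` D).
  move=> ik; have := tb _ (ltnW ik); have := tb _ ik.
  move=> /andP[_ ti1T] /andP[_ tiT].
  apply/seteqP; split => w /=.
    move=> [hA [hB hD]]; split; first exact/(ExT _ _ _ ti1T).
    by split => //; exact/(nExT _ _ tiT).
  move=> [hA [hB hD]]; split; first exact/(ExT _ _ _ ti1T).
  by split => //; apply/(nExT _ _ tiT).
have hE i : (i <= k)%N -> E i = ~` Ex Z D 0 (t i) `&` Z (t i) @^-1` (~` D).
  move=> ik; have := tb _ ik => /andP[ti0 tiT].
  apply/seteqP; split => w /=.
    move=> [tE hD]; split => //; apply/(nExT _ _ tiT).
    by rewrite tE.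
  move=> [hN hD]; split => //; apply/eqP; rewrite eq_le.
  rewrite (@tau_le _ _ _ _ Z D T) ?ti0 ?tiT //=.
  by apply/(nExT _ _ tiT).
have mAB i : (i < k)%N -> measurable (AB i).
  move=> ik; rewrite hAB //; have := tb _ (ltnW ik); have := tb _ ik.
  move=> /andP[_ ti1T] /andP[ti0 tiT].
  apply: measurableI; first exact: mEx.
  apply: measurableI; last exact: mpre _ _ mD.
  by apply: measurableC; apply: mEx; rewrite ?lexx.
have mE i : (i <= k)%N -> measurable (E i).
  move=> ik; rewrite hE //; have := tb _ ik => /andP[ti0 tiT].
  apply: measurableI; last exact: mpre _ _ mDc.
  by apply: measurableC; apply: mEx; rewrite ?lexx.
have Phi_eq i : (i < k)%N ->
    Phi (distribution P (Z (t i))) (h i) (Psi i) = P (AB i).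
  move=> ik; have := tb _ (ltnW ik); have := tb _ ik.
  move=> /andP[_ ti1T] /andP[ti0 tiT].
  have tii := tinc i ik.
  have mA : measurable [set w | (tau Z D T (t i) w < (t i.+1)%:E)%E].
    have -> : [set w | (tau Z D T (t i) w < (t i.+1)%:E)%E] = Ex Z D (t i) (t i.+1).
      by apply/seteqP; split => w /=; move/(ExT _ _ _ ti1T).
    exact: mEx.
  have hBset : [set w | ((t i)%:E <= tau Z D T 0 w)%E /\ D (toRm (Z (t i) w))]
        = ~` Ex Z D 0 (t i) `&` Z (t i) @^-1` D.
      apply/seteqP; split => w /= [h1 h2]; split => //; move: h1.
        by move/(nExT _ _ tiT).
      by move/(nExT _ _ tiT).
  have mB : measurable
      [set w | ((t i)%:E <= tau Z D T 0 w)%E /\ D (toRm (Z (t i) w))].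
    rewrite hBset.
    apply: measurableI; last exact: mpre _ _ mD.
    by apply: measurableC; apply: mEx; rewrite ?lexx.
  rewrite /AB; symmetry; apply: (@markov_step _ _ _ P _ T Z (t i)) => //.
  all: try exact: Hh. all: try exact: HPsi. all: try by rewrite ti0 tiT.
  - have -> : [set w | (tau Z D T (t i) w < (t i.+1)%:E)%E] = Ex Z D (t i) (t i.+1).
      by apply/seteqP; split => w /=; move/(ExT _ _ _ ti1T).
    apply: ExI => //.
    + exact: sigma_algebra0.
    + by move=> F hF; exact: sigma_algebra_bigcup.
    + move=> s /andP[s1 s2]; apply: sub_sigma_algebra.
      by exists s, (~` D); split => //; rewrite s1 (le_trans s2 ti1T).
  - rewrite hBset.
    apply: sigmaI; last first.
      by apply: sub_sigma_algebra; exists (t i), D; rewrite ti0 lexx.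
    apply: sigmaC; apply: ExI => //.
    + exact: sigma_algebra0.
    + by move=> F hF; exact: sigma_algebra_bigcup.
    + move=> s /andP[s1 s2]; apply: sub_sigma_algebra.
      by exists s, (~` D); rewrite s1 s2.
have key : forall j, (j <= k)%N ->
    P (Ex Z D 0 (t j)) = (\sum_(i < j) (P (AB i) + P (E i)))%E.
  elim=> [|j IH] jk.
    rewrite big_ord0 t0; have -> : Ex Z D 0 0 = set0.
      apply/seteqP; split => // w [s [/andP[s0 s1] _]].
      by have := le_lt_trans s0 s1; rewrite ltxx.
    exact: measure0.
  have jk' : (j < k)%N := jk.
  have := tb _ (ltnW jk'); have := tb _ jk'.
  move=> /andP[_ tj1T] /andP[tj0 tjT].
  have tjj := tinc j jk'.
  rewrite big_ord_recr /= -IH ?(ltnW jk) //.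
  have -> : Ex Z D 0 (t j.+1) = Ex Z D 0 (t j) `|` (AB j `|` E j).
    rewrite hAB // hE ?(ltnW jk) //.
    apply/seteqP; split => w.
      move=> [s [/andP[s0 s1] hD]].
      have [hx|hx] := pselect (Ex Z D 0 (t j) w); first by left.
      right; have [hd|hd] := pselect (D (toRm (Z (t j) w))).
        left; split; last by split.
        exists s; split => //; rewrite s1 andbT leNgt; apply/negP => stj.
        by apply: hx; exists s; rewrite s0 stj.
      by right.
    move=> [[s [/andP[s0 s1] hD]]|[[[s [/andP[s0 s1] hD]] _]|[_ hD]]].
    - by exists s; rewrite s0 (lt_le_trans s1 (ltW tjj)).
    - by exists s; rewrite (le_trans tj0 s0) s1.
    - by exists (t j); rewrite tj0 tjj.
  have mX0 := mEx 0 (t j) (lexx 0) tjT.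
  have mABj := mAB j jk'.
  have mEj := mE j (ltnW jk').
  rewrite (measureU P) //; last 2 first.
  - exact: measurableU.
  - rewrite hAB // hE ?(ltnW jk) //.
    apply/seteqP; split => // w [h1 [[_ [h2 _]]|[h2 _]]] //.
  rewrite (measureU P) //.
  rewrite hAB // hE ?(ltnW jk) //.
  by apply/seteqP; split => // w [[_ [_ h1]] [_ h2]].
have tkb := tb k (leqnn k).
have hX : [set w | exists s, 0 <= s <= T /\ ~ D (toRm (Z s w))] =
    Ex Z D 0 (t k) `|` E k.
  rewrite hE // tk; apply/seteqP; split => w.
    move=> [s [/andP[s0 sT] hD]].
    have [hx|hx] := pselect (Ex Z D 0 T w); first by left.
    right; split => //.
    have [sT'|sT'] := ltP s T; last first.
      by have -> : T = s by apply/eqP; rewrite eq_le sT sT'.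
    by exfalso; apply: hx; exists s; rewrite s0 sT'.
  move=> [[s [/andP[s0 s1] hD]]|[_ hD]].
  - by exists s; rewrite s0 ltW.
  - by exists T; split => //; rewrite lexx andbT; move: tkb; rewrite tk => /andP[].
rewrite /exit_cumulant hX (measureU P) //; last 3 first.
- by apply: mEx; [exact: lexx | case/andP: tkb].
- exact: mE.
- rewrite hE // tk; apply/seteqP; split => // w [h1 [h2 _]] //.
apply: (@eq_trans _ _ ((\sum_(i < k) (P (AB i) + P (E i))) + P (E k))%E).
  by congr (_ + _)%E; exact: key.
rewrite big_ord_recr /= big_split /= addeA.
congr (_ + _ + _)%E; apply: eq_bigr => i _; rewrite Phi_eq //.
Qed.
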